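(* Suppose $m$, $n$ are positive integers. Then \[ \sum_{k = 1}^{m} (-1)^{k-1} \binom{m}{k} \frac{1}{k^{n}} = \frac{1}{n!} \sum_{\{A_{1},\dotsc,A_{j}\} \in \Pi(n)} a_{|A_{1}|} \cdots a_{|A_{j}|}, \] where $a_{i} = (i-1)!\, H^{(i)}_{m}$ for each positive integer $i$.
   Context: $\Pi(n)$ is the set of all set partitions of $\{1,\dots,n\}$ into nonempty blocks $A_1,\dots,A_j$ (with $j$ varying), and $|A|$ is the cardinality of $A$. $H^{(i)}_m=\sum_{k=1}^m k^{-i}$ is the generalized harmonic number. *)

(* Defs.v *)
From mathcomp Require Import all_boot all_order all_algebra.
Set Implicit Arguments. Unset Strict Implicit. Unset Printing Implicit Defensive.
Import Order.TTheory GRing.Theory Num.Theory.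
Local Open Scope ring_scope.

Definition harm (i m : nat) : rat :=
  \sum_(1 <= k < m.+1) (k%:R ^+ i)^-1.

Definition acoef (m i : nat) : rat := (i.-1)`!%:R * harm i m.

(* Main.v *)
Require Import Defs.
From mathcomp Require Import all_boot all_order all_algebra.
From mathcomp Require Import ring zify.
Set Implicit Arguments. Unset Strict Implicit. Unset Printing Implicit Defensive.
Import Order.TTheory GRing.Theory Num.Theory.
Local Open Scope ring_scope.

Section Comb.
Variables (T : finType) (f : nat -> rat).

Definition Gp (A : {set T}) : rat :=
  \sum_(P : {set {set T}} | partition P A) \prod_(B in P) f #|B|.

Lemma Gp0 : Gp set0 = 1.
Proof.
rewrite /Gp (eq_bigl (fun P => P == set0)) => [|P]; last exact: partition_set0.
by rewrite big_pred1_eq big_set0.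
Qed.

Lemma Gsplit (x : T) (A : {set T}) : x \in A ->
  Gp A = \sum_(B : {set T} | (x \in B) && (B \subset A)) f #|B| * Gp (A :\: B).
Proof.
move=> xA.
rewrite /Gp (partition_big (fun P => pblock P x)
   (fun B => (x \in B) && (B \subset A))) /=; last first.
  move=> P pP; have xc : x \in cover P by rewrite (cover_partition pP).
  by rewrite mem_pblock xc (partitionS pP) // pblock_mem.
apply: eq_bigr => B /andP[xB BA].
rewrite big_distrr /=.
rewrite (reindex_onto (fun Q => B |: Q) (fun P => P :\ B)) /=; last first.
  move=> P /andP[pP /eqP <-]; apply: setD1K; apply: pblock_mem.
  by rewrite (cover_partition pP).
have key : forall Q, partition Q (A :\: B) -> B \notin Q.
  move=> Q pQ; apply/negP => BQ.
  have := partitionS pQ BQ => /subsetP /(_ x xB); by rewrite inE xB.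
apply: eq_big => Q.
  apply/idP/idP.
    move=> /andP[/andP[pP _] /eqP e]; rewrite -e.
    by apply: partitionD1 => //; rewrite setU11.
  move=> pQ.
  have BnQ := key Q pQ.
  have B0 : B != set0 by apply/set0Pn; exists x.
  have dj : [disjoint B & A :\: B].
    by rewrite disjoint_sym; exact: (proj2 (subsetDP (subxx (A :\: B)))).
  have pU := partitionU1 pQ B0 dj.
  have eA : B :|: (A :\: B) = A.
    apply/setP => y; rewrite !inE; case yB: (y \in B) => //=.
    by rewrite (subsetP BA).
  rewrite eA in pU.
  rewrite pU /= (def_pblock (partition_trivIset pU) (setU11 B Q) xB) eqxx /=.
  by rewrite setU1K.
move=> /andP[/andP[pP _] /eqP e].
have pQ : partition Q (A :\: B).
  by rewrite -e; apply: partitionD1 => //; rewrite setU11.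
rewrite big_setU1 //=; exact: key.
Qed.

Lemma sum_by_size (D : {set T}) (F : nat -> rat) :
  \sum_(B : {set T} | B \subset D) F #|B| =
  \sum_(j < #|D|.+1) 'C(#|D|, j)%:R * F j.
Proof.
rewrite (partition_big (fun B : {set T} => (inord #|B| : 'I_(#|D|.+1))) xpredT) //=.
apply: eq_bigr => j _.
rewrite -(cards_draws D j) mulr_natl -sumr_const.
apply: eq_big => B.
  rewrite inE; case BD: (B \subset D) => //=.
  by rewrite -val_eqE /= inordK // ltnS subset_leq_card.
by move=> /andP[BD /eqP <-]; rewrite inordK // ltnS subset_leq_card.
Qed.

End Comb.
Fixpoint hh (m n : nat) {struct m} : rat :=
  match m with
  | 0 => (n == 0)%:R
  | m'.+1 => let fix go n := match n with
                             | 0 => 1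
                             | n'.+1 => hh m' n'.+1 + go n' / m'.+1%:R
                             end in go n
  end.

Lemma hh0n n : hh 0 n = (n == 0)%:R. Proof. by []. Qed.
Lemma hhS0 m : hh m.+1 0 = 1. Proof. by []. Qed.
Lemma hhSS m n : hh m.+1 n.+1 = hh m n.+1 + hh m.+1 n / m.+1%:R. Proof. by []. Qed.
Lemma hh_0 m : hh m 0 = 1. Proof. by case: m. Qed.
Arguments hh : simpl never.

Lemma harm0 i : harm i 0 = 0. Proof. by rewrite /harm big_geq. Qed.
Lemma harmS i m : harm i m.+1 = harm i m + (m.+1%:R ^+ i)^-1.
Proof. by rewrite /harm big_nat_recr. Qed.

Lemma newton m k :
  k.+1%:R * hh m k.+1 = \sum_(j < k.+1) harm j.+1 m * hh m (k - j).
Proof.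
elim: m k => [|m IHm] k.
  by rewrite hh0n mulr0 big1 // => j _; rewrite harm0 mul0r.
set x := (m.+1%:R : rat)^-1.
have hx : forall i, (m.+1%:R ^+ i)^-1 = x ^+ i by move=> i; rewrite exprVn.
elim: k => [|k IHk].
  rewrite big_ord1 (_ : (0 - _)%N = 0%N) // hhSS !hh_0 harmS mulr1 !mul1r.
  have := IHm 0; rewrite big_ord1 (_ : (0 - _)%N = 0%N) // hh_0 mulr1 mul1r => ->.
  by rewrite hx expr1.
have split : \sum_(j < k.+2) harm j.+1 m.+1 * hh m.+1 (k.+1 - j) =
   \sum_(j < k.+2) harm j.+1 m * hh m.+1 (k.+1 - j) +
   \sum_(j < k.+2) x ^+ j.+1 * hh m.+1 (k.+1 - j).
  by rewrite -big_split; apply: eq_bigr => j _; rewrite harmS hx mulrDl.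
rewrite split.
have Sq : \sum_(j < k.+2) harm j.+1 m * hh m.+1 (k.+1 - j) =
   k.+2%:R * hh m k.+2 + x * \sum_(j < k.+1) harm j.+1 m * hh m.+1 (k - j).
  rewrite IHm big_ord_recr /= subnn hh_0 [in RHS]big_ord_recr /= subnn hh_0.
  rewrite big_distrr /= addrAC; congr (_ + _).
  rewrite -big_split /=; apply: eq_bigr => j _.
  have ej : (k.+1 - j = (k - j).+1)%N by rewrite subSn // -ltnS.
  by rewrite ej hhSS /x; ring.
have Sx : \sum_(j < k.+2) x ^+ j.+1 * hh m.+1 (k.+1 - j) =
   x * hh m.+1 k.+1 + x * \sum_(j < k.+1) x ^+ j.+1 * hh m.+1 (k - j).
  rewrite big_ord_recl /= subn0 expr1; congr (_ + _).
  by rewrite big_distrr; apply: eq_bigr => j _ /=; rewrite subSS exprS mulrA.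
rewrite Sq Sx.
have : \sum_(j < k.+1) harm j.+1 m * hh m.+1 (k - j) +
       \sum_(j < k.+1) x ^+ j.+1 * hh m.+1 (k - j) = k.+1%:R * hh m.+1 k.+1.
  by rewrite IHk -big_split; apply: eq_bigr => j _; rewrite harmS hx mulrDl.
move=> E.
rewrite hhSS -/x.
have -> : hh m.+1 k.+1 / m.+1%:R = x * hh m.+1 k.+1 by rewrite mulrC.
move: E.
set s1 := \sum_(j < k.+1) harm j.+1 m * hh m.+1 (k - j).
set s2 := \sum_(j < k.+1) x ^+ j.+1 * hh m.+1 (k - j).
move=> E.
have -> : s1 = k.+1%:R * hh m.+1 k.+1 - s2 by rewrite -E addrK.
rewrite -[k.+2]addn1 natrD.
ring.
Qed.
Definition L' (m n : nat) : rat :=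
  \sum_(k < m) (-1) ^+ k * 'C(m, k.+1)%:R / (k.+1%:R ^+ n).

Lemma LL' m n : \sum_(1 <= k < m.+1) ((-1) ^+ (k.-1) * 'C(m, k)%:R / (k%:R ^+ n) : rat)
  = L' m n.
Proof. by rewrite big_add1 /= big_mkord. Qed.

Lemma L'0 m : L' m.+1 0 = 1.
Proof.
have h := exprBn (1 : rat) 1 m.+1.
rewrite subrr expr0n /= big_ord_recl /= expr0 !expr1n !mul1r bin0 in h.
have e : \sum_(i < m.+1) (-1) ^+ (bump 0 i) * 1 ^+ (m.+1 - bump 0 i) * 1 ^+ bump 0 i
   *+ 'C(m.+1, bump 0 i) = - L' m.+1 0.
  rewrite /L' -sumrN; apply: eq_bigr => i _.
  by rewrite !expr1n !mulr1 /bump /= add1n exprS mulN1r mulNrn mulr_natr.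
rewrite e in h.
have h' : 1 - L' m.+1 0 = 0 by rewrite -h. by apply/eqP; rewrite eq_sym -subr_eq0 h'.
Qed.

Lemma L'S m n : L' m.+1 n.+1 = L' m n.+1 + L' m.+1 n / m.+1%:R.
Proof.
have e1 : L' m n.+1 = \sum_(k < m.+1) (-1) ^+ k * 'C(m, k.+1)%:R / (k.+1%:R ^+ n.+1).
  by rewrite /L' big_ord_recr /= bin_small // mulr0 mul0r addr0.
rewrite e1 /L' mulr_suml -big_split; apply: eq_bigr => k _ /=.
have hb := mul_bin_diag m.+1 k.
have hb' : ('C(m, k)%:R : rat) = k.+1%:R * 'C(m.+1, k.+1)%:R / m.+1%:R.
  by rewrite -natrM -hb natrM [_ * _ / _]mulrC mulKf // pnatr_eq0.
have hC : ('C(m, k.+1)%:R : rat) = 'C(m.+1, k.+1)%:R - 'C(m, k)%:R.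
  by rewrite binS natrD addrK.
rewrite hC hb'.
have k0 : (k.+1%:R : rat) != 0 by rewrite pnatr_eq0.
have m0 : (m.+1%:R : rat) != 0 by rewrite pnatr_eq0.
rewrite exprS.
have y0 : (k.+1%:R : rat) ^+ n != 0 by rewrite expf_neq0.
move: y0; set y := _ ^+ n => y0.
set s := (-1) ^+ k.
set c := 'C(m.+1, k.+1)%:R.
by field; rewrite !(addrC 1) !natr1 m0 y0 k0.
Qed.

Lemma hh1 n : hh 1 n = 1.
Proof. by elim: n => [|n IH]; rewrite ?hh_0 // hhSS hh0n IH divr1 add0r. Qed.

Lemma L_hh m n : L' m.+1 n = hh m.+1 n.
Proof.
elim: m n => [|m IH] n.
  by rewrite hh1 /L' big_ord1 expr0 binn mul1r expr1n divr1.
elim: n => [|n IHn]; first by rewrite L'0 hh_0.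
by rewrite L'S IH IHn hhSS.
Qed.

Section Main.
Variables (T : finType) (m : nat).

Lemma G_hh n (A : {set T}) : (#|A| <= n)%N ->
  Gp (acoef m) A = #|A|`!%:R * hh m #|A|.
Proof.
elim: n A => [|n IH] A hA.
  have A0 : A = set0 by apply: cards0_eq; apply/eqP; rewrite -leqn0.
  by rewrite A0 Gp0 cards0 hh_0 mulr1.
case: (set_0Vmem A) => [-> | [x xA]]; first by rewrite Gp0 cards0 hh_0 mulr1.
have cA : #|A| = #|A :\ x|.+1 by rewrite (cardsD1 x A) xA.
set k := #|A :\ x| in cA.
rewrite (Gsplit _ xA).
have step1 : \sum_(B : {set T} | (x \in B) && (B \subset A))
      acoef m #|B| * Gp (acoef m) (A :\: B) =
    \sum_(B : {set T} | (x \in B) && (B \subset A))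
      acoef m #|B| * ((k.+1 - #|B|)`!%:R * hh m (k.+1 - #|B|)).
  apply: eq_bigr => B /andP[xB BA].
  have cB : #|A :\: B| = (#|A| - #|B|)%N by rewrite cardsD (setIidPr BA).
  have B0 : (0 < #|B|)%N by apply/card_gt0P; exists x.
  rewrite IH cB -?cA //.
  by move: hA B0; lia.
rewrite step1.
rewrite (reindex_onto (fun B' => x |: B') (fun B => B :\ x)) /=; last first.
  by move=> B /andP[xB _]; rewrite setD1K.
have step2 : \sum_(B' : {set T} | (x \in x |: B') && (x |: B' \subset A)
       && ((x |: B') :\ x == B'))
     acoef m #|x |: B'| * ((k.+1 - #|x |: B'|)`!%:R * hh m (k.+1 - #|x |: B'|))
   = \sum_(B' : {set T} | B' \subset A :\ x)
     acoef m #|B'|.+1 * ((k - #|B'|)`!%:R * hh m (k - #|B'|)).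
  apply: eq_big => B'.
    rewrite subsetD1 setU11 /= subUset sub1set xA /=.
    case xB: (x \in B').
      rewrite andbF; case: eqP => [e|_]; last by rewrite andbF.
      by move: xB; rewrite -e setD11.
    by rewrite (setU1K (negbT xB)) eqxx.
  move=> /andP[_ /eqP e].
  have xB : x \notin B' by rewrite -e setD11.
  by rewrite cardsU1 xB add1n subSS.
rewrite step2 (sum_by_size _ (fun j => acoef m j.+1 * ((k - j)`!%:R * hh m (k - j)))).
rewrite -/k cA.
have step3 : \sum_(j < k.+1) 'C(k, j)%:R * (acoef m j.+1 * ((k - j)`!%:R * hh m (k - j)))
   = k`!%:R * \sum_(j < k.+1) harm j.+1 m * hh m (k - j).
  rewrite big_distrr; apply: eq_bigr => j _ /=.
  have hj : (j <= k)%N by rewrite -ltnS.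
  rewrite /acoef /= -(bin_fact hj) !natrM.
  ring.
by rewrite step3 -newton factS natrM mulrA [k.+1%:R * _]mulrC.
Qed.
End Main.

Theorem theorem3 (m n : nat) (hm : (0 < m)%N) (hn : (0 < n)%N) :
  \sum_(1 <= k < m.+1) ((-1) ^+ (k.-1) * 'C(m, k)%:R / (k%:R ^+ n) : rat)
  = (n`!%:R)^-1 *
    \sum_(P : {set {set 'I_n}} | partition P [set: 'I_n])
       \prod_(B in P) acoef m #|B|.
Proof.
have := G_hh m (leqnn #|[set: 'I_n]|).
rewrite /Gp cardsT card_ord => ->.
rewrite mulKf ?pnatr_eq0 -?lt0n ?fact_gt0 //.
rewrite LL'; case: m hm => // m _; exact: L_hh.
Qed.
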